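(* Fix $n$. No two non-isomorphic graphs in $\mathbb{K}^{n_{1},n_{2},\ldots,n_{k}}_{n}=\{K^{n_{1},\ldots,n_{k}}_{n}\mid k\ge2,\ n_i\ge1,\ \sum_{i=1}^{k}n_{i}+1=n\}$ are $D$-cospectral.
   Context: Two connected graphs are $D$-cospectral if their distance matrices have the same spectrum. $K^{n_{1},\ldots,n_{k}}_{n}$ denotes the graph on $n$ vertices having a vertex $v$ of degree $n-1$ such that $G-v$ is the disjoint union of complete graphs $K_{n_1},\dots,K_{n_k}$. *)

(* Defs.v *)
From HB Require Import structures.
From mathcomp Require Import all_boot all_order all_algebra all_field.
From mathcomp Require Import algC.
Set Implicit Arguments. Unset Strict Implicit. Unset Printing Implicit Defensive.
Import Order.TTheory GRing.Theory Num.Theory.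

Fixpoint walk_within (T : finType) (e : rel T) (k : nat) (u v : T) : bool :=
  if k is k'.+1 then
    walk_within e k' u v || [exists w, walk_within e k' u w && e w v]
  else u == v.

(* Since walk_within is monotone in k, it equals the number of k < #|T|
   for which no such walk exists (correct for connected graphs, where
   every distance is < #|T|). *)
Definition gdist (T : finType) (e : rel T) (u v : T) : nat :=
  count (fun k => ~~ walk_within e k u v) (iota 0 #|T|).

Definition dist_mx (n : nat) (e : rel 'I_n) : 'M[algC]_n :=
  \matrix_(i, j) ((gdist e i j)%:R)%R.

(* D-cospectral: the distance matrices have the same spectrum, i.e. the same
   characteristic polynomial (spectrum counted with multiplicity). *)
Definition D_cospectral (n : nat) (e1 e2 : rel 'I_n) : Prop :=
  char_poly (dist_mx e1) = char_poly (dist_mx e2).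

Definition graph_iso (T1 T2 : finType) (e1 : rel T1) (e2 : rel T2) : Prop :=
  exists f : T1 -> T2, bijective f /\ forall u v, e1 u v = e2 (f u) (f v).

(* The graph K_n^{n_1,...,n_k} for s = [:: n_1; ...; n_k] on vertices 'I_n:
   vertex 0 is the dominating vertex, vertices 1..n_1 form the first clique,
   the next n_2 vertices the second clique, etc.  block s v = number of
   blocks lying entirely before vertex v. *)
Definition block (s : seq nat) (v : nat) : nat :=
  count (fun j => sumn (take j.+1 s) < v) (iota 0 (size s)).

Definition Kgraph (n : nat) (s : seq nat) : rel 'I_n :=
  fun u v => (u != v) &&
    [|| val u == 0, val v == 0 | block s (val u) == block s (val v)].

Definition valid_parts (n : nat) (s : seq nat) : Prop :=
  [/\ 2 <= size s, all (fun x => 0 < x) s & sumn s + 1 = n].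
Arguments Kgraph : clear implicits.

(* Main.v *)
Require Import Defs.
From mathcomp Require Import all_boot all_order all_algebra all_field algC.
From mathcomp Require Import ring zify.
From mathcomp Require Import perm fingroup.
Set Implicit Arguments. Unset Strict Implicit. Unset Printing Implicit Defensive.
Import Order.TTheory GRing.Theory Num.Theory.
Local Open Scope ring_scope.

Lemma mul_sel (R : comNzRingType) m p q (f : 'I_m -> 'I_p) (M : 'M[R]_(p, q)) :
  (\matrix_(u, j) ((f u == j)%:R) : 'M[R]_(m, p)) *m M = \matrix_(u, l) M (f u) l.
Proof.
apply/matrixP => u l; rewrite !mxE (bigD1 (f u)) //= mxE eqxx mul1r big1 ?addr0 //.
by move=> j /negbTE; rewrite mxE eq_sym => ->; rewrite mul0r.
Qed.

Lemma det2 (R : comNzRingType) (A : 'M[R]_2) : \det A = A 0 0 * A 1 1 - A 0 1 * A 1 0.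
Proof.
rewrite (expand_det_row _ ord0) !big_ord_recl big_ord0 addr0 /cofactor !det_mx11 !mxE /=.
have e1 : lift ord0 (0 : 'I_1) = 1 :> 'I_2 by apply/val_inj.
have e2 : lift (lift ord0 ord0) (0 : 'I_1) = 0 :> 'I_2 by apply/val_inj.
have e3 : lift ord0 ord0 = 1 :> 'I_2 by apply/val_inj.
have e0 : ord0 = 0 :> 'I_2 by apply/val_inj.
rewrite e2 e1 ?e3 ?e0 !expr0 !mul1r expr1. ring.
Qed.

Lemma sylv (F : comNzRingType) (N r : nat) (a : F) (U : 'M[F]_(N, r)) (V : 'M[F]_(r, N)) :
  a ^+ r * \det (a%:M - U *m V) = a ^+ N * \det (a%:M - V *m U).
Proof.
pose M := block_mx (a%:M : 'M_N) U V (1%:M : 'M_r).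
have h1 : M = block_mx 1%:M U 0 1%:M *m block_mx (a%:M - U *m V) 0 V 1%:M.
  rewrite mulmx_block !mul1mx !mul0mx !mulmx1 subrK.
  by rewrite /M; congr block_mx; apply/matrixP=> i j; rewrite !mxE add0r.
have h2 : block_mx 1%:M 0 (- V) (a%:M : 'M_r) *m M = block_mx (a%:M) U 0 (a%:M - V *m U).
  rewrite mulmx_block !mul1mx !mul0mx !mulmx1 !mulNmx mul_mx_scalar mul_scalar_mx addNr.
  congr block_mx; apply/matrixP=> i j; rewrite !mxE ?add0r ?addr0 // addrC //.
have := congr1 determinant h2.
rewrite det_mulmx det_lblock det_ublock !det_scalar expr1n mul1r => <-.
by rewrite h1 det_mulmx det_ublock det_lblock !det_scalar !expr1n !mul1r mulr1.
Qed.

Lemma auxE (x c A B : algC) : x != 0 -> x * (c - (x^-1 * A + x^-1 * B)) = x * c - (A + B).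
Proof. by move=> hx; field. Qed.

Definition wv k (i : 'I_k.+1) : algC := (i != ord0)%:R.
Definition Kmx k : 'M[algC]_k.+1 :=
  \matrix_(i, j) (1 + wv i * wv j - (i == j)%:R * wv i).

Lemma stage2 k (al : algC) (mv : 'I_k.+1 -> algC) :
  al != 0 -> mv ord0 = 1 -> (forall j, al + mv (lift ord0 j) != 0) ->
  let sg := \sum_(j < k) mv (lift ord0 j) / (al + mv (lift ord0 j)) in
  \det (al%:M - Kmx k *m diag_mx (\row_j mv j)) =
  al * (\prod_(j < k) (al + mv (lift ord0 j))) * ((1 - al^-1 - sg) * (1 - sg) - sg ^+ 2).
Proof.
move=> al0 m0 mn0 sg.
pose d j := al + wv j * mv j.
have w0 : wv (ord0 : 'I_k.+1) = 0 by rewrite /wv eqxx.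
have wl : forall j : 'I_k, wv (lift ord0 j) = 1 by move=> j; rewrite /wv eq_sym neq_lift.
have dn0 : forall j, d j != 0.
  move=> j; rewrite /d; case: (unliftP ord0 j) => [j'|] ->; first by rewrite wl mul1r.
  by rewrite w0 mul0r addr0.
pose Di := diag_mx (\row_j (d j)^-1).
pose U : 'M[algC]_(k.+1, 2) := \matrix_(i, c) (if c == 0 then 1 else wv i).
pose V : 'M[algC]_(2, k.+1) := \matrix_(c, j) (if c == 0 then mv j else wv j * mv j).
have E : al%:M - Kmx k *m diag_mx (\row_j mv j) = diag_mx (\row_j d j) *m (1%:M - (Di *m U) *m V).
  rewrite /Di mul_diag_mx; apply/matrixP => i j; rewrite mul_diag_mx mul_mx_diag !mxE.
  rewrite !big_ord_recl big_ord0 !mxE /= addr0.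
  have wsq : wv i * wv i = wv i by rewrite /wv; case: (i != ord0); rewrite ?mul1r ?mul0r.
  have := dn0 i; rewrite /d => h.
  rewrite /d mulr1 -mulrA (auxE _ _ _ h).
  case: (eqVneq i j) => [<-|nij]; rewrite ?eqxx ?(negbTE nij) /=.
    rewrite mulr1n mulr1 ?mul1r mulrA wsq. ring.
  rewrite mulr0n mulr0 ?mul0r ?subr0 ?mul1r. ring.
rewrite E det_mulmx det_diag.
have := sylv 1 (Di *m U) V; rewrite !expr1n !mul1r => ->.
rewrite det2 /Di mul_diag_mx !mxE.
have dl : forall j : 'I_k, d (lift ord0 j) = al + mv (lift ord0 j).
  by move=> j; rewrite /d wl mul1r.
have d0 : d ord0 = al by rewrite /d w0 mul0r addr0.
have sgE : forall (F : 'I_k.+1 -> algC), F ord0 = 0 ->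
    (forall j, F (lift ord0 j) = mv (lift ord0 j) / (al + mv (lift ord0 j))) ->
    \sum_j F j = sg.
  by move=> F F0 Fl; rewrite big_ord_recl F0 add0r; apply: eq_bigr => j _; rewrite Fl.
set DU := (\matrix_(i, j0) ((\row_j1 (d j1)^-1) 0 i * U i j0) : 'M_(k.+1, 2)).
have s00 : \sum_j V 0 j * DU j 0 = al^-1 + sg.
  rewrite big_ord_recl !mxE /= d0 m0 mul1r mulr1; congr (_ + _).
  by apply: eq_bigr => j _; rewrite !mxE /= dl mulr1 mulrC.
have s01 : \sum_j V 0 j * DU j 1 = sg.
  by apply: sgE => [|j]; rewrite !mxE /= ?w0 ?mulr0 // wl dl mulr1 mulrC.
have s10 : \sum_j V 1 j * DU j 0 = sg.
  by apply: sgE => [|j]; rewrite !mxE /= ?w0 ?mul0r // wl dl mul1r mulr1 mulrC.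
have s11 : \sum_j V 1 j * DU j 1 = sg.
  by apply: sgE => [|j]; rewrite !mxE /= ?w0 ?mul0r // wl dl mul1r mulr1 mulrC.
rewrite s00 s01 s10 s11 big_ord_recl !mxE d0; congr (_ * _ * _).
  by apply: eq_bigr => j _; rewrite mxE dl.
rewrite /= ; ring.
Qed.
Lemma block_cons a l v : block (a :: l) v = if (a < v)%N then (block l (v - a)).+1 else 0.
Proof.
rewrite /block /=.
have -> : iota 1 (size l) = map (addn 1) (iota 0 (size l)) by rewrite -iotaDl.
rewrite count_map /= take0 addn0.
case: ltnP => h.
  rewrite add1n; congr S; apply: eq_count => j /=.
  by rewrite ltn_subRL add1n.
rewrite add0n; apply/eqP; rewrite -leqn0 leqNgt -has_count.
apply/hasP => [[j _ /=]]; lia.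
Qed.

Lemma count_block l j : count (fun v => block l v == j) (iota 1 (sumn l)) = nth 0 l j.
Proof.
elim: l j => [|a l IH] j /=; first by case: j.
rewrite iotaD count_cat addnC (addnC 1 a) iotaDl count_map.
have -> : count (fun v => block (a :: l) v == j) (iota 1 a) = if j == 0 then a else 0.
  rewrite -[in RHS](size_iota 1 a) -count_predT.
  rewrite (eq_in_count (a2 := fun _ => j == 0)); first by case: (j == 0); rewrite ?count_predT ?count_pred0.
  by move=> v; rewrite mem_iota (block_cons a l v) => /andP [_ h]; rewrite ltnNge -ltnS h /= eq_sym.
rewrite (eq_in_count (a2 := fun w => (block l w).+1 == j)); last first.
  move=> w; rewrite mem_iota /= (block_cons a l (a + w)) => /andP [h _].
  by rewrite ifT; [rewrite addKn|lia].
case: j => [|j] /=.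
  by rewrite (eq_count (a2 := pred0)) // count_pred0.
by rewrite addn0 -IH.
Qed.

Lemma block_lt l v : (0 < v <= sumn l)%N -> (block l v < size l)%N.
Proof.
elim: l v => [|a l IH] v /=; first by lia.
rewrite block_cons => h; case: ifP => // av.
by rewrite ltnS; apply: IH; lia.
Qed.

Definition labf (s : seq nat) (v : nat) : nat := if v == 0%N then 0%N else (block s v).+1.

Lemma labf_le s v : (v < sumn s + 1)%N -> (labf s v <= size s)%N.
Proof.
rewrite /labf; case: eqP => // v0 h.
by apply: block_lt; lia.
Qed.

Lemma Kgraph_lab n s (u v : 'I_n) : Kgraph n s u v =
  (u != v) && [|| labf s u == 0%N, labf s v == 0%N | labf s u == labf s v].
Proof.
rewrite /Kgraph /labf; congr andb.
by case: (val u == 0%N); case: (val v == 0%N).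
Qed.

Definition mc n s (j : 'I_(size s).+1) : algC :=
  \sum_(u < n) ((inord (labf s u) : 'I_(size s).+1) == j)%:R.

Arguments mc : clear implicits.

Lemma mcE n s j : n = (sumn s + 1)%N ->
  mc n s j = (count (fun v => labf s v == val j) (iota 0 n))%:R.
Proof.
move=> hn; rewrite /mc -natr_sum; congr (_%:R).
rewrite -(big_mkord xpredT (fun v => ((inord (labf s v) : 'I_(size s).+1) == j) : nat)).
rewrite /index_iota subn0 -sum1_count [RHS]big_mkcond /=.
apply: eq_big_seq => v; rewrite mem_iota add0n => /andP [_ hv].
have := @labf_le s v; rewrite -hn => /(_ hv) h.
by rewrite -(inj_eq val_inj) /= inordK //; case: (_ == _).
Qed.

Lemma count_labf s c : count (fun v => labf s v == c) (iota 0 (sumn s + 1)) =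
  if c is j.+1 then nth 0%N s j else 1%N.
Proof.
rewrite addn1 /= {1}/labf eqxx.
rewrite (eq_in_count (a2 := fun v => (block s v).+1 == c)); last first.
  by move=> v; rewrite mem_iota /labf => /andP [h _]; rewrite ifN //; lia.
case: c => [|j] /=.
  by rewrite (eq_count (a2 := pred0)) // count_pred0.
by rewrite count_block.
Qed.

Lemma mc0 n s : n = (sumn s + 1)%N -> mc n s ord0 = 1.
Proof. by move=> hn; rewrite mcE // hn count_labf. Qed.

Lemma mcl n s j : n = (sumn s + 1)%N -> mc n s (lift ord0 j) = (nth 0%N s j)%:R.
Proof. by move=> hn; rewrite mcE // hn /= /bump /= add1n count_labf. Qed.
Lemma walk1 (T : finType) (e : rel T) u v : walk_within e 1 u v = (u == v) || e u v.
Proof.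
rewrite /=; congr orb; apply/existsP/idP => [[w /andP [/eqP -> //]]|h].
by exists u; rewrite eqxx.
Qed.

Lemma walkS (T : finType) (e : rel T) k u v :
  walk_within e k.+1 u v = walk_within e k u v || [exists w, walk_within e k u w && e w v].
Proof. by []. Qed.

Lemma walk1_refl (T : finType) (e : rel T) u : walk_within e 1 u u.
Proof. by rewrite walk1; apply/orP; left; apply/eqP. Qed.

Lemma walk1_edge (T : finType) (e : rel T) u v : e u v -> walk_within e 1 u v.
Proof. by move=> h; rewrite walk1 h orbT. Qed.

Lemma walk_ge2 (T : finType) (e : rel T) (z : T) :
  (forall v, v != z -> e z v && e v z) ->
  forall k u v, walk_within e k.+2 u v.
Proof.
move=> hz; elim=> [|k IH] u v; last by rewrite walkS IH.
have [->|uv] := eqVneq u v; first by rewrite walkS walk1; apply/orP; left; apply/orP; left; apply/eqP.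
rewrite walkS; apply/orP; right; apply/existsP.
have [vz|vz] := eqVneq v z.
  by exists u; rewrite walk1_refl /= vz; rewrite vz in uv; case/andP: (hz u uv).
exists z; case/andP: (hz v vz) => -> _; rewrite andbT.
have [->|uz] := eqVneq u z; first by rewrite walk1_refl.
by case/andP: (hz u uz) => _ h; apply: walk1_edge.
Qed.

Lemma gdist_dom (T : finType) (e : rel T) (z : T) :
  (forall v, v != z -> e z v && e v z) -> (1 < #|T|)%N ->
  forall u v, gdist e u v = if u == v then 0 else if e u v then 1 else 2.
Proof.
move=> hz hT u v; rewrite /gdist.
have -> : iota 0 #|T| = 0 :: 1 :: iota 2 (#|T| - 2).
  by rewrite -[in LHS](subnKC hT).
rewrite [count _ _]/count -/(count _ _) walk1.
have w0 : walk_within e 0 u v = (u == v) by [].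
rewrite w0.
rewrite (eq_in_count (a2 := pred0)); last first.
  move=> k; rewrite mem_iota => /andP [h _].
  by rewrite /= -(subnKC h) (walk_ge2 hz).
rewrite count_pred0.
by case: (u == v); case: (e u v).
Qed.

Definition blab n s (u : 'I_n) : 'I_(size s).+1 := inord (labf s u).
Arguments blab : clear implicits.
Definition Rm n s : 'M[algC]_(n, (size s).+1) := \matrix_(u, j) ((blab n s u == j)%:R).
Arguments Rm : clear implicits.

Lemma dist_decomp n s : n = (sumn s + 1)%N -> (1 < n)%N ->
  dist_mx (Kgraph n s) = Rm n s *m (Kmx (size s) *m (Rm n s)^T) - 1%:M.
Proof.
move=> hn hs.
have n0 : (0 < n)%N by rewrite hn addn1.
pose z := Ordinal n0.
have hz : forall v, v != z -> Kgraph n s z v && Kgraph n s v z.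
  by move=> v vz; rewrite /Kgraph eq_sym vz /= !orbT.
have hT : (1 < #|'I_n|)%N by rewrite card_ord.
have G := gdist_dom hz hT.
have lb : forall u : 'I_n, val (blab n s u) = labf s u.
  by move=> u; apply: inordK; rewrite ltnS labf_le // -hn.
rewrite -[Kmx _]trmxK -trmx_mul !mul_sel.
apply/matrixP => u v; rewrite !mxE G Kgraph_lab /wv.
have e0 : forall u : 'I_n, (blab n s u != ord0) = (labf s u != 0%N).
  by move=> w; rewrite -(inj_eq val_inj) lb.
rewrite !e0.
have -> : (blab n s u == blab n s v) = (labf s u == labf s v).
  by rewrite -(inj_eq val_inj) !lb.
case: (eqVneq u v) => [<-|uv] /=.
  rewrite eqxx.
  by case: (labf s u != 0%N) => /=; ring.
rewrite mulr0n subr0.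
have [a ea] : exists a, labf s u = a by eauto.
have [c ec] : exists c, labf s v = c by eauto.
rewrite ea ec; clear ea ec.
case: (eqVneq a 0%N) => [?|a0]; case: (eqVneq c 0%N) => [?|c0]; subst => /=.
- by ring.
- by rewrite eq_sym (negbTE c0) /=; ring.
- by rewrite (negbTE a0) /=; ring.
case: (eqVneq a c) => [?|ac]; subst => /=; ring.
Qed.

Lemma horner_char (m : nat) (A : 'M[algC]_m) x : (char_poly A).[x] = \det (x%:M - A).
Proof.
rewrite /char_poly -horner_evalE -det_map_mx; congr determinant.
apply/matrixP => i j; rewrite !mxE.
by rewrite rmorphB rmorphMn /= !horner_evalE hornerX hornerC.
Qed.

Lemma char_eval n s (x : algC) : n = (sumn s + 1)%N -> (1 < n)%N -> (size s < n)%N ->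
  x + 1 != 0 -> (forall j, x + 1 + (nth 0%N s j)%:R != 0) ->
  let al := x + 1 in
  let sg := \sum_(j < size s) (nth 0%N s j)%:R / (al + (nth 0%N s j)%:R) in
  (char_poly (dist_mx (Kgraph n s))).[x] = al ^+ (n - (size s).+1) *
  (al * (\prod_(j < size s) (al + (nth 0%N s j)%:R)) * ((1 - al^-1 - sg) * (1 - sg) - sg ^+ 2)).
Proof.
move=> hn h1 hk al0 hj al sg.
rewrite horner_char dist_decomp //.
have -> : x%:M - (Rm n s *m (Kmx (size s) *m (Rm n s)^T) - 1%:M) =
          al%:M - Rm n s *m (Kmx (size s) *m (Rm n s)^T).
  apply/matrixP => i j; rewrite !mxE /al.
  by case: (i == j) => /=; ring.
have RR : (Rm n s)^T *m Rm n s = diag_mx (\row_j mc n s j).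
  apply/matrixP => i j; rewrite !mxE.
  case: (eqVneq i j) => [<-|ij].
    rewrite mulr1n /mc; apply: eq_bigr => u _; rewrite !mxE.
    by case: (_ == _); rewrite ?mulr1 ?mulr0.
  rewrite mulr0n; apply: big1 => u _; rewrite !mxE.
  case: (eqVneq (blab n s u) i) => [->|ui]; last by rewrite mul0r.
  by rewrite (negbTE ij) mulr0.
have := sylv al (Rm n s) (Kmx (size s) *m (Rm n s)^T).
rewrite -mulmxA RR stage2 ?mc0 //; last by move=> j; rewrite mcl.
have Pe : \prod_(j < size s) (al + mc n s (lift ord0 j)) = \prod_(j < size s) (al + (nth 0%N s j)%:R).
  by apply: eq_bigr => j _; rewrite mcl.
have Se : \sum_(j < size s) mc n s (lift ord0 j) / (al + mc n s (lift ord0 j)) = sg.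
  by apply: eq_bigr => j _; rewrite mcl.
rewrite Pe Se => E.
apply: (mulfI (expf_neq0 (size s).+1 al0)); rewrite E /al [RHS]mulrA -exprD subnKC //.
Qed.

Definition qp (s : seq nat) : {poly algC} := \prod_(a <- s) ('X + (a.+1)%:R%:P).
Fixpoint rp (s : seq nat) : {poly algC} :=
  if s is a :: l then a%:R%:P * qp l + ('X + (a.+1)%:R%:P) * rp l else 0.
Definition Pp (s : seq nat) : {poly algC} := 'X * qp s - ('X *+ 2 + 1) * rp s.

Lemma qp_cons a l : qp (a :: l) = ('X + (a.+1)%:R%:P) * qp l.
Proof. by rewrite /qp big_cons. Qed.

Lemma rpE s : rp s = (size s)%:R%:P * qp s - ('X + 1) * (qp s)^`().
Proof.
elim: s => [|a l IH] /=; first by rewrite /qp big_nil derivC mulr0 mul0r subr0.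
rewrite qp_cons IH derivM derivD derivX derivC addr0 mul1r.
rewrite -[(size l).+1]addn1 !natrD !polyCD -addn1 natrD polyCD polyC1.
ring.
Qed.

Definition Lop (c : algC) (d : {poly algC}) : {poly algC} :=
  ('X * d) * (1 - 2 * c)%:P - d * c%:P + ('X * ('X * d^`())) * 2%:P
  + ('X * d^`()) * 3%:P + d^`().

Lemma Pp_Lop s : Pp s = Lop (size s)%:R (qp s).
Proof.
rewrite /Pp /Lop rpE !polyCB !polyCM polyC1 !polyC_natr. ring.
Qed.

Lemma Lop_sub c d1 d2 : Lop c (d1 - d2) = Lop c d1 - Lop c d2.
Proof. rewrite /Lop derivB. ring. Qed.

Lemma Lop_inj (k : nat) d : Lop k%:R d = 0 -> d = 0.
Proof.
have [->//|dn0] := eqVneq d 0; move=> H; exfalso; move: H.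
have [m sm] : exists m, size d = m.+1.
  by exists (size d).-1; rewrite prednK // size_poly_gt0.
move=> /(congr1 (fun p : {poly algC} => p`_m.+1)).
rewrite /Lop !(coefD, coefN, coefMC, coefXM, coef_deriv) /=.
have h1 : d`_m.+1 = 0 by rewrite nth_default // sm.
have h2 : d`_m.+2 = 0 by rewrite nth_default // sm.
rewrite h1 h2 mul0r subr0 !mul0rn mul0r !addr0 coef0.
have lc : d`_m != 0.
  by move: dn0; rewrite -lead_coef_eq0 lead_coefE sm.
have -> : (if m == 0%N then 0 else d`_m.-1.+1 *+ m.-1.+1) = d`_m *+ m.
  by case: m {sm h1 h2 lc} => [|m].
move/eqP; apply/negP.
have -> : d`_m * (1 - 2 * k%:R) + d`_m *+ m * 2 = d`_m * ((m.*2.+1)%:R - (k.*2)%:R).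
  rewrite -mulr_natr -!muln2 !natrM -addn1 natrD. ring.
rewrite mulf_eq0 negb_or lc /= subr_eq0 eqC_nat.
apply/eqP => /(congr1 odd); rewrite /= !odd_double //.
Qed.

Lemma XaddC_neq0 (c : algC) : ('X + c%:P) != 0.
Proof. by rewrite -size_poly_eq0 size_XaddC. Qed.

Lemma qp_root a t : (qp t).[- (a.+1)%:R] = 0 -> a \in t.
Proof.
rewrite /qp horner_prod => /eqP; rewrite prodf_seq_eq0 => /hasP [b bt].
rewrite !hornerE addrC subr_eq0 eqC_nat => /eqP [<-] //.
Qed.

Lemma qp_perm s t : qp s = qp t -> perm_eq s t.
Proof.
elim: s t => [|a l IH] t.
  case: t => [//|b t]; rewrite qp_cons => /(congr1 (horner^~ (- (b.+1)%:R))).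
  rewrite /qp big_nil hornerM !hornerE addNr mul0r => /eqP; by rewrite oner_eq0.
move=> E.
have at_ : a \in t by apply: qp_root; rewrite -E qp_cons hornerM !hornerE addNr mul0r.
have pt := perm_to_rem at_.
have : qp l = qp (rem a t).
  apply: (mulfI (XaddC_neq0 (a.+1)%:R)); rewrite -!qp_cons E.
  by rewrite /qp (perm_big _ pt).
move/IH => h; rewrite perm_sym in pt.
by apply: perm_trans pt; rewrite perm_cons.
Qed.

Lemma qp_m1 s : (qp s).[-1] = \prod_(a <- s) a%:R.
Proof.
rewrite /qp horner_prod; apply: eq_bigr => a _.
by rewrite !hornerE -addn1 natrD addrCA addNr addr0.
Qed.

Lemma rp_m1 s : (rp s).[-1] = (size s)%:R * (qp s).[-1].
Proof.
elim: s => [|a l IH] /=; first by rewrite !hornerE ?mul0r.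
rewrite qp_cons hornerD !hornerM hornerD hornerX !hornerC IH -[a.+1]addn1 -[(size l).+1]addn1 !natrD !qp_m1.
ring.
Qed.

Lemma Pp_m1 s : (2 <= size s)%N -> all (fun x => 0 < x)%N s -> (Pp s).[-1] != 0.
Proof.
move=> ss pos; rewrite /Pp !hornerE rp_m1.
have -> : -1 * (qp s).[-1] - (-1 *+ 2 + 1) * ((size s)%:R * (qp s).[-1])
   = ((size s).-1)%:R * (qp s).[-1].
  rewrite -{1}(prednK (ltnW ss)) -[(size s).-1.+1]addn1 natrD. ring.
rewrite mulf_neq0 //; first by rewrite pnatr_eq0 -lt0n -ltnS prednK // ltnW.
rewrite qp_m1 prodf_seq_neq0; apply/allP => a /(allP pos).
by rewrite pnatr_eq0 -lt0n.
Qed.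

Lemma cancel_pow (a b : nat) (P Q : {poly algC}) :
  P.[-1] != 0 -> Q.[-1] != 0 ->
  ('X + 1) ^+ a * P = ('X + 1) ^+ b * Q -> a = b /\ P = Q.
Proof.
have nz : forall m, ('X + 1 : {poly algC}) ^+ m != 0.
  by move=> m; rewrite expf_neq0 // -polyC1 XaddC_neq0.
wlog ab : a b P Q / (a <= b)%N.
  move=> W hP hQ E; case: (leqP a b) => h; first exact: W.
  by have [-> ->] := W b a Q P (ltnW h) hQ hP (esym E).
move=> hP hQ; rewrite -(subnKC ab) exprD -mulrA => /(mulfI (nz a)) E.
case: (b - a)%N E => [|d] E; first by rewrite E mul1r addn0.
move: hP; rewrite E hornerM horner_exp hornerD hornerX hornerC addNr exprS !mul0r eqxx.
by [].
Qed.


Lemma qp_eval s x : (qp s).[x] = \prod_(a <- s) (x + 1 + a%:R).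
Proof.
rewrite /qp horner_prod; apply: eq_bigr => a _.
by rewrite hornerD hornerX hornerC -[a.+1]addn1 natrD; ring.
Qed.

Lemma rp_eval s x : (forall a, a \in s -> x + 1 + a%:R != 0) ->
  (rp s).[x] = (qp s).[x] * \sum_(a <- s) a%:R / (x + 1 + a%:R).
Proof.
elim: s => [|a l IH] h /=; first by rewrite big_nil mulr0 horner0.
have ha : x + 1 + a%:R != 0 by apply: h; rewrite inE eqxx.
rewrite hornerD !hornerM IH; last by move=> b bl; apply: h; rewrite inE bl orbT.
rewrite qp_cons hornerM big_cons !hornerD hornerX !hornerC -[a.+1]addn1 natrD.
by field.
Qed.

Lemma Pp_eval s x : x + 1 != 0 -> (forall j, x + 1 + (nth 0%N s j)%:R != 0) ->
  let al := x + 1 in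
  let sg := \sum_(j < size s) (nth 0%N s j)%:R / (al + (nth 0%N s j)%:R) in
  (Pp s).[x] = al * (\prod_(j < size s) (al + (nth 0%N s j)%:R)) * ((1 - al^-1 - sg) * (1 - sg) - sg ^+ 2).
Proof.
move=> al0 hj al sg.
have hs : forall a, a \in s -> x + 1 + a%:R != 0.
  by move=> a /(nthP 0%N) [j js <-]; apply: hj.
have qe : (qp s).[x] = \prod_(j < size s) (al + (nth 0%N s j)%:R).
  by rewrite qp_eval (big_nth 0%N) big_mkord.
have se : \sum_(a <- s) a%:R / (x + 1 + a%:R) = sg.
  by rewrite (big_nth 0%N) big_mkord.
rewrite /Pp hornerD hornerN !hornerM rp_eval // qe se hornerD hornerMn !hornerX hornerC.
rewrite /al in al0 *; by field.
Qed.


Lemma char_Pp n s : n = (sumn s + 1)%N -> (1 < n)%N -> (size s < n)%N ->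
  char_poly (dist_mx (Kgraph n s)) = ('X + 1) ^+ (n - (size s).+1) * Pp s.
Proof.
move=> hn h1 hk; apply/eqP; rewrite -subr_eq0; apply/negPn/negP => pn0.
set p := _ - _ in pn0.
have A : all (root p) [seq i%:R | i <- iota 0 (size p)].
  apply/allP => y /mapP [i _ ->]; rewrite /root /p hornerD hornerN hornerM horner_exp.
  have nz1 : (i%:R : algC) + 1 != 0 by rewrite natr1 pnatr_eq0.
  have nz2 : forall j, (i%:R : algC) + 1 + (nth 0%N s j)%:R != 0.
    by move=> j; rewrite natr1 -natrD pnatr_eq0.
  rewrite (char_eval hn h1 hk nz1 nz2) (Pp_eval nz1 nz2) hornerD hornerX hornerC.
  by rewrite subrr.
have U : uniq [seq (i%:R : algC) | i <- iota 0 (size p)].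
  rewrite map_inj_uniq ?iota_uniq //.
  by move=> a b /eqP; rewrite eqC_nat => /eqP.
by have := max_poly_roots pn0 A U; rewrite size_map size_iota ltnn.
Qed.

Local Close Scope ring_scope.

Lemma iso_perm n s t : n = (sumn s + 1)%N -> n = (sumn t + 1)%N -> perm_eq s t ->
  graph_iso (Kgraph n s) (Kgraph n t).
Proof.
move=> hns hnt pst.
have sz : size s = size t by apply: perm_size.
case Ek : (size t) => [|k].
  have t0 : t = [::] by apply/size0nil.
  have s0 : s = [::] by apply/size0nil; rewrite sz.
  rewrite t0 s0; exists id; split => //; exact: (Bijective (g := id)).
pose tt := @Tuple k.+1 _ t (introT eqP Ek).
move: (pst); rewrite -[t]/(tval tt) => /tuple_permP [sg E].
have hsg : forall j : 'I_k.+1, nth 0%N s j = nth 0%N t (sg j).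
  by move=> j; rewrite E nth_mktuple (tnth_nth 0%N).
pose sp (j : nat) : nat := if (j < k.+1)%N then val (sg (inord j)) else j.
pose si (j : nat) : nat := if (j < k.+1)%N then val ((sg^-1)%g (inord j)) else j.
have spK : cancel sp si.
  move=> j; rewrite /sp /si; case: (ltnP j k.+1) => jk; last by rewrite ltnNge jk.
  by rewrite ltn_ord inord_val permK /= inordK.
have siK : cancel si sp.
  move=> j; rewrite /sp /si; case: (ltnP j k.+1) => jk; last by rewrite ltnNge jk.
  by rewrite ltn_ord inord_val permKV /= inordK.
pose pi (a : nat) : nat := if a is a'.+1 then (sp a').+1 else 0%N.
pose pinv (a : nat) : nat := if a is a'.+1 then (si a').+1 else 0%N.
have piK : cancel pi pinv by case => //= a; rewrite spK.
have pinvK : cancel pinv pi by case => //= a; rewrite siK.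
have pieq : forall a c, (pi a == c) = (a == pinv c).
  by move=> a c; apply/eqP/eqP => [<-|->]; rewrite ?piK ?pinvK.
change (graph_iso (Kgraph n s) (Kgraph n t)).
have cnt : forall (F : nat -> nat) c,
    count_mem c [tuple F (val u) | u < n] = count (fun v => F v == c) (iota 0 n).
  by move=> F c; rewrite /= -val_enum_ord !count_map.
pose lt := [tuple labf t (val u) | u < n].
have P : perm_eq [tuple pi (labf s (val u)) | u < n] lt.
  rewrite /perm_eq; apply/allP => c _; apply/eqP.
  rewrite /lt (cnt (fun v => pi (labf s v))) cnt.
  rewrite (eq_count (a2 := fun v => labf s v == pinv c)); last by move=> v; rewrite pieq.
  rewrite hns count_labf -hns hnt count_labf.
  case: c => [|j] //=.
  rewrite /si; case: (ltnP j k.+1) => jk.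
    have := hsg ((sg^-1)%g (inord j)); rewrite permKV => ->; by rewrite /= inordK.
  by rewrite !nth_default // ?Ek // sz Ek.
case/tuple_permP: P => p Ep.
have hp : forall u : 'I_n, pi (labf s u) = labf t (p u).
  move=> u; have := congr1 (fun l => nth 0%N l u) Ep.
  by rewrite !nth_mktuple tnth_mktuple.
exists p; split.
  by exists (p^-1)%g => u; rewrite ?permK ?permKV.
move=> u v; rewrite !Kgraph_lab -!hp (inj_eq perm_inj) (inj_eq (can_inj piK)).
by rewrite !pieq.
Qed.


Lemma sumn_ge s : all (fun x => 0 < x) s -> size s <= sumn s.
Proof. elim: s => [|a l IH] //= /andP [h1 h2]; have := IH h2; lia. Qed.

Theorem theorem3p5 (n : nat) (s t : seq nat) :
  valid_parts n s -> valid_parts n t ->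
  D_cospectral (Kgraph n s) (Kgraph n t) ->
  graph_iso (Kgraph n s) (Kgraph n t).
Proof.
case=> ss ps hs; case=> st pt ht; rewrite /D_cospectral.
have gs := sumn_ge ps; have gt := sumn_ge pt.
have hs' : n = sumn s + 1 by [].
have ht' : n = sumn t + 1 by [].
rewrite (char_Pp hs') ?(char_Pp ht'); try lia.
case/(cancel_pow (Pp_m1 ss ps) (Pp_m1 st pt)) => ek.
have ekk : size s = size t by lia.
rewrite !Pp_Lop ekk => /eqP; rewrite -GRing.subr_eq0 -Lop_sub => /eqP /Lop_inj /eqP.
rewrite GRing.subr_eq0 => /eqP /qp_perm.
exact: iso_perm.
Qed.
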